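(* For every integer $r\ge 3$ and every integer $s$ with $3\le s\le 2r$, there exists an $r$-uniform linear hypertree $H$ with $\Delta(H)=s$ and $\hat{n}(H)=0$.
   Context: All hypergraphs are finite, simple (if $e\subseteq e'$ are hyperedges then $e=e'$) and have no loops; isolated vertices are allowed. $H$ is $r$-uniform if every hyperedge has exactly $r$ vertices. The degree of a vertex is the number of hyperedges containing it, and $\Delta(H)$ is the maximum degree. $H$ is linear if $|e\cap e'|\le 1$ for all distinct hyperedges $e,e'$. $H$ is a hypertree if there is a tree $T$ with $V(T)=V(H)$ such that for every hyperedge $e$ the induced subgraph $T[e]$ is connected. A digraph has arcs $(u,v)$ with no pair of opposite arcs; it is acyclic if it has no directed cycle. For a digraph $D$, $N^-_D(v)=\{u:(u,v)\in A(D)\}$ and $N^+_D(v)=\{u:(v,u)\in A(D)\}$. The niche hypergraph $NH(D)$ of an acyclic digraph $D$ has vertex set $V(D)$ and hyperedge set $\{e\subseteq V(D): |e|\ge 2 \text{ and } e=N^-_D(v) \text{ or } e=N^+_D(v) \text{ for some } v\in V(D)\}$. The niche number $\hat n(H)$ is the minimum $k\ge 0$ such that $H$ together with $k$ additional isolated vertices is the niche hypergraph of an acyclic digraph ($\infty$ if no such $k$ exists). *)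

(* Defs.v *)
From mathcomp Require Import all_boot.
Set Implicit Arguments. Unset Strict Implicit. Unset Printing Implicit Defensive.

(* A hypergraph on the finite vertex type T is given by its set of hyperedges
   E : {set {set T}}.  Vertices of T outside every edge are isolated vertices. *)
Section Hyper.
Variable T : finType.
Implicit Types (E : {set {set T}}).

Definition is_hypergraph E : Prop :=
  (forall e e', e \in E -> e' \in E -> e \subset e' -> e = e') /\
  (forall e, e \in E -> 2 <= #|e|).

Definition uniform (r : nat) E : Prop := forall e, e \in E -> #|e| = r.

Definition linear_hg E : Prop :=
  forall e e', e \in E -> e' \in E -> e != e' -> #|e :&: e'| <= 1.

Definition degree E (v : T) : nat := #|[set e in E | v \in e]|.

Definition max_degree E : nat := \max_(v : T) degree E v.

(* a (spanning) tree on T: symmetric irreflexive relation that is connected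
   and has exactly #|T| - 1 (unordered) edges *)
Definition is_tree (t : rel T) : Prop :=
  symmetric t /\ irreflexive t /\ (forall x y, connect t x y) /\
  #|[set p : T * T | t p.1 p.2]| = 2 * (#|T| - 1).

Definition induced_connected (t : rel T) (e : {set T}) : Prop :=
  forall x y, x \in e -> y \in e ->
    connect (fun a b => [&& t a b, a \in e & b \in e]) x y.

Definition hypertree E : Prop :=
  exists t : rel T, is_tree t /\ forall e, e \in E -> induced_connected t e.

(* digraphs: arc relation D : rel T; acyclic = no directed cycle
   (this also rules out loops and pairs of opposite arcs) *)
Definition acyclic_digraph (D : rel T) : Prop :=
  forall x y, D x y -> ~~ connect D y x.

Definition in_nbhd (D : rel T) (v : T) : {set T} := [set u | D u v].
Definition out_nbhd (D : rel T) (v : T) : {set T} := [set u | D v u].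

Definition niche_hypergraph (D : rel T) : {set {set T}} :=
  [set e : {set T} | (2 <= #|e|) &&
     [exists v, (e == in_nbhd D v) || (e == out_nbhd D v)]].

Definition add_isolated E (k : nat) : {set {set (T + 'I_k)%type}} :=
  [set [set (inl x : (T + 'I_k)%type) | x in e] | e : {set T} in E].

End Hyper.

Definition niche_realizable (T : finType) (E : {set {set T}}) (k : nat) : Prop :=
  exists D : rel (T + 'I_k)%type,
    @acyclic_digraph (T + 'I_k)%type D /\
    @niche_hypergraph (T + 'I_k)%type D = add_isolated E k.

Definition niche_number_is (T : finType) (E : {set {set T}}) (k : nat) : Prop :=
  niche_realizable E k /\ forall j, j < k -> ~ niche_realizable E j.

(* Main.v *)
Require Import Defs.
From mathcomp Require Import all_boot.
Set Implicit Arguments. Unset Strict Implicit. Unset Printing Implicit Defensive.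
Lemma card_le1 (T : finType) (A : {set T}) :
  (forall x y, x \in A -> y \in A -> x = y) -> #|A| <= 1.
Proof.
move=> H; case: (set_0Vmem A) => [->|[x Hx]]; first by rewrite cards0.
rewrite -(cards1 x); apply: subset_leq_card; apply/subsetP => y Hy.
by rewrite inE (H y x Hy Hx).
Qed.

Section TreeGen.
Variables (T : finType) (root : T) (par : T -> T) (rank : T -> nat).
Hypothesis hrank : forall x, x != root -> rank (par x) < rank x.

Definition ptree : rel T := fun x y =>
  ((x != root) && (par x == y)) || ((y != root) && (par y == x)).

Lemma ptree_sym : symmetric ptree.
Proof. by move=> x y; rewrite /ptree orbC. Qed.

Lemma ptree_root x : connect ptree x root.
Proof.
elim: {x}(rank x) {-2}x (leqnn (rank x)) => [|n IH] x hx.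
  case: (eqVneq x root) => [->|hne]; first exact: connect0.
  by have := hrank hne; rewrite ltnNge (leq_trans hx (leq0n _)).
case: (eqVneq x root) => [->|hne]; first exact: connect0.
apply: (connect_trans (y := par x)); last first.
  by apply: IH; rewrite -ltnS; apply: leq_trans (hrank hne) hx.
by apply: connect1; rewrite /ptree hne eqxx.
Qed.

Lemma ptree_is_tree : is_tree ptree.
Proof.
split; first exact: ptree_sym.
split.
  move=> x; rewrite /ptree orbb; apply/negP => /andP[hne /eqP hp].
  by have := hrank hne; rewrite hp ltnn.
split.
  move=> x y; apply: (connect_trans (ptree_root x)).
  by rewrite (sym_connect_sym ptree_sym) ptree_root.
pose P1 := [set (x, par x) | x in [set~ root]].
pose P2 := [set (par x, x) | x in [set~ root]].
have -> : [set p : T * T | ptree p.1 p.2] = P1 :|: P2.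
  apply/setP => [[x y]]; rewrite !inE /ptree /=.
  apply/idP/idP.
    rewrite /P1 /P2; case/orP => /andP[hne /eqP <-]; apply/orP; [left|right];
      by apply: imset_f; rewrite !inE.
  rewrite /P1 /P2; case/orP => /imsetP[z]; rewrite !inE => hz [-> ->]; by rewrite hz eqxx ?orbT.
have i1 : injective (fun x => (x, par x)) by move=> x y [].
have i2 : injective (fun x => (par x, x)) by move=> x y [].
rewrite cardsU; have -> : P1 :&: P2 = set0.
  apply/setP => [[x y]]; rewrite !inE; apply/negP => /andP[].
  case/imsetP => z; rewrite !inE => hz [-> ->].
  case/imsetP => w; rewrite !inE => hw [e1 e2].
  have := hrank hz; have := hrank hw; rewrite -e1 e2.
  by move=> h1 h2; have := ltn_trans h1 h2; rewrite ltnn.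
rewrite cards0 subn0 !card_imset // cardsC1.
by rewrite addnn -mul2n subn1.
Qed.

Lemma ptree_induced (e : {set T}) (m : T) :
  m \in e -> (forall x, x \in e -> x != m -> (x != root) && (par x \in e)) ->
  induced_connected ptree e.
Proof.
move=> hm H.
pose R := fun a b => [&& ptree a b, a \in e & b \in e].
have Rsym : symmetric R by move=> a b; rewrite /R ptree_sym; case: (a \in e); case: (b \in e); rewrite ?andbF ?andbT.
have toM : forall x, x \in e -> connect R x m.
  move=> x; elim: {x}(rank x) {-2}x (leqnn (rank x)) => [|n IH] x hx xe.
    case: (eqVneq x m) => [->|hne]; first exact: connect0.
    case/andP: (H x xe hne) => hne' _.
    by have := hrank hne'; rewrite ltnNge (leq_trans hx (leq0n _)).
  case: (eqVneq x m) => [->|hne]; first exact: connect0.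
  case/andP: (H x xe hne) => hne' pe.
  apply: (connect_trans (y := par x)); last first.
    by apply: IH => //; rewrite -ltnS; apply: leq_trans (hrank hne') hx.
  by apply: connect1; rewrite /R /ptree hne' eqxx xe pe.
move=> x y xe ye; apply: (connect_trans (toM x xe)).
by rewrite (sym_connect_sym Rsym) toM.
Qed.
End TreeGen.

Lemma acyclic_rank (T : finType) (D : rel T) (f : T -> nat) :
  (forall x y, D x y -> f x < f y) -> acyclic_digraph D.
Proof.
move=> H x y dxy; apply/negP => /connectP[p].
have key : forall z q, path D z q -> f z <= f (last z q).
  move=> z q; elim: q z => [|w q IH] z //= /andP[dzw pq].
  by apply: leq_trans (ltnW (H _ _ dzw)) (IH _ pq).
move=> pth lst; have := key _ _ pth; rewrite -lst => h.
by have := leq_trans (H _ _ dxy) h; rewrite ltnn.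
Qed.

Definition liftD (T : finType) (D : rel T) : rel (T + 'I_0)%type :=
  fun x y => match x, y with inl a, inl b => D a b | _, _ => false end.

Lemma liftD_acyclic (T : finType) (D : rel T) (f : T -> nat) :
  (forall x y, D x y -> f x < f y) -> acyclic_digraph (liftD D).
Proof.
move=> H; apply: (acyclic_rank (f := fun x => match x with inl a => f a | inr _ => 0 end)).
by move=> [a|[i hi]] [b|[j hj]] //= /H.
Qed.

Lemma liftNH (T : finType) (D : rel T) :
  niche_hypergraph (liftD D) = add_isolated (niche_hypergraph D) 0.
Proof.
have injl : injective (@inl T 'I_0) by move=> a b [].
have hin : forall v, in_nbhd (liftD D) (inl v) = [set inl x | x in in_nbhd D v].
  move=> v; apply/setP => [[a|[i hi]]] //; rewrite inE /= ?(mem_imset _ _ injl) ?inE //.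
have hout : forall v, out_nbhd (liftD D) (inl v) = [set inl x | x in out_nbhd D v].
  move=> v; apply/setP => [[a|[i hi]]] //; rewrite inE /= ?(mem_imset _ _ injl) ?inE //.
apply/setP => e; rewrite /add_isolated inE; apply/idP/idP.
  case/andP => he /existsP [[v|[i hi]]] //; rewrite hin hout.
  case/orP => /eqP ee; apply/imsetP;
    [exists (in_nbhd D v) | exists (out_nbhd D v)]; rewrite // inE;
    (apply/andP; split; [by rewrite -(card_imset _ injl) -ee |
     by apply/existsP; exists v; rewrite eqxx ?orbT]).
case/imsetP => e0; rewrite inE => /andP[h0 /existsP[v hv]] ->.
rewrite card_imset // h0 /=; apply/existsP; exists (inl v); rewrite hin hout.
by case/orP: hv => /eqP ->; rewrite eqxx ?orbT.
Qed.
Section Constr.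
Variables r s : nat.
Definition VT := (unit + 'I_r + 'I_r + 'I_s * 'I_r.-1)%type.
Definition vc : VT := inl (inl (inl tt)).
Definition vw i : VT := inl (inl (inr i)).
Definition vu j : VT := inl (inr j).
Definition vb k m : VT := inr (k, m).

Variant vspec : VT -> Type :=
 | VC : vspec vc | VW i : vspec (vw i) | VU j : vspec (vu j) | VB k m : vspec (vb k m).
Lemma vertP x : vspec x.
Proof. by case: x => [[[[]|i]|j]|[k m]]; constructor. Qed.

Definition D0 : rel VT := fun x y =>
  match x, y with
  | inl (inl (inl _)), inl (inl (inr _)) => true
  | inr (k, _), inl (inl (inr i)) => (k : nat) == i
  | inl (inr _), inl (inl (inl _)) => true
  | inl (inr j), inr (k, _) => (k : nat) == r + j
  | _, _ => false
  end.

Definition F : {set VT} := [set vw i | i : 'I_r].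
Definition G : {set VT} := [set vu j | j : 'I_r].
Definition Hk (k : 'I_s) : {set VT} := vc |: [set vb k m | m : 'I_r.-1].
Definition E : {set {set VT}} := F |: (G |: [set Hk k | k : 'I_s]).

Definition isw (x : VT) := if x is inl (inl (inr _)) then true else false.
Definition isu (x : VT) := if x is inl (inr _) then true else false.
Definition isb (k : 'I_s) (x : VT) := if x is inr (k', _) then k' == k else false.

Lemma inF x : (x \in F) = isw x.
Proof.
case: (vertP x) => [|i|j|k m] /=; last 3 first.
- by apply/imsetP; exists i.
- by apply/imsetP => -[].
- by apply/imsetP => -[].
by apply/imsetP => -[].
Qed.
Lemma inG x : (x \in G) = isu x.
Proof.
case: (vertP x) => [|i|j|k m] /=; try by apply/imsetP => -[].
by apply/imsetP; exists j.
Qed.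
Lemma inH k x : (x \in Hk k) = (x == vc) || isb k x.
Proof.
rewrite in_setU1; case: (vertP x) => [|i|j|k' m] /=; try (by rewrite eqxx);
  try (by apply/imsetP => -[]).
- by [].
apply/imsetP/idP => [[m' _ [-> _]] | /eqP ->] //; by exists m.
Qed.
Lemma inE' e : (e \in E) = [|| e == F, e == G | [exists k, e == Hk k]].
Proof.
rewrite !inE; congr [|| _, _ | _]; apply/imsetP/existsP => [[k _ ->]|[k /eqP ->]];
  by exists k.
Qed.

Hypothesis hr : 2 < r.
Hypothesis hs : s <= 2 * r.

Lemma card_le1' (A : {set VT}) :
  (forall x y, x \in A -> y \in A -> x = y) -> #|A| <= 1.
Proof.
move=> H; case: (set_0Vmem A) => [->|[x Hx]]; first by rewrite cards0.
rewrite -(cards1 x); apply: subset_leq_card; apply/subsetP => y Hy.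
by rewrite inE (H y x Hy Hx).
Qed.

Lemma cardF : #|F| = r.
Proof. by rewrite card_imset ?card_ord // => i j []. Qed.
Lemma cardG : #|G| = r.
Proof. by rewrite card_imset ?card_ord // => i j []. Qed.
Lemma cardH k : #|Hk k| = r.
Proof.
rewrite cardsU1 card_imset ?card_ord; last by move=> i j [].
have -> : vc \notin [set vb k m | m : 'I_r.-1] by apply/imsetP => -[].
by rewrite add1n prednK // (ltn_trans _ hr).
Qed.

Lemma in_c : in_nbhd D0 vc = G.
Proof. by apply/setP => x; rewrite inE inG; case: (vertP x). Qed.
Lemma out_c : out_nbhd D0 vc = F.
Proof. by apply/setP => x; rewrite inE inF; case: (vertP x). Qed.
Lemma in_w (i : 'I_r) (k : 'I_s) : (k : nat) = i -> in_nbhd D0 (vw i) = Hk k.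
Proof.
move=> ki; apply/setP => x; rewrite inE inH; case: (vertP x) => //= k' m.
by rewrite -ki.
Qed.
Lemma in_w_small (i : 'I_r) : s <= i -> #|in_nbhd D0 (vw i)| <= 1.
Proof.
move=> si; have H : forall x, x \in in_nbhd D0 (vw i) -> x = vc.
  move=> x; rewrite inE; case: (vertP x) => //= k m /eqP e.
  by have := ltn_ord k; rewrite e ltnNge si.
by apply: card_le1' => x y /H -> /H ->.
Qed.
Lemma out_w (i : 'I_r) : #|out_nbhd D0 (vw i)| <= 1.
Proof.
apply: card_le1' => x y; rewrite !inE.
by case: (vertP x).
Qed.
Lemma in_u (j : 'I_r) : #|in_nbhd D0 (vu j)| <= 1.
Proof.
apply: card_le1' => x y; rewrite !inE.
by case: (vertP x).
Qed.
Lemma out_u (j : 'I_r) (k : 'I_s) : (k : nat) = r + j -> out_nbhd D0 (vu j) = Hk k.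
Proof.
move=> kj; apply/setP => x; rewrite inE inH; case: (vertP x) => //= k' m.
by rewrite -kj.
Qed.
Lemma out_u_small (j : 'I_r) : s <= r + j -> #|out_nbhd D0 (vu j)| <= 1.
Proof.
move=> si; have H : forall x, x \in out_nbhd D0 (vu j) -> x = vc.
  move=> x; rewrite inE; case: (vertP x) => //= k m /eqP e.
  by have := ltn_ord k; rewrite e ltnNge si.
by apply: card_le1' => x y /H -> /H ->.
Qed.
Lemma in_b k m : #|in_nbhd D0 (vb k m)| <= 1.
Proof.
apply: card_le1' => x y; rewrite !inE.
case: (vertP x) => //= j; case: (vertP y) => //= j' /eqP e1 /eqP e2.
by congr vu; apply: val_inj; apply/eqP; rewrite -(eqn_add2l r) -e1 -e2.
Qed.
Lemma out_b k m : #|out_nbhd D0 (vb k m)| <= 1.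
Proof.
apply: card_le1' => x y; rewrite !inE.
case: (vertP x) => //= j; case: (vertP y) => //= j' /eqP e1 /eqP e2.
by congr vw; apply: val_inj; rewrite /= -e1 -e2.
Qed.

Lemma NH_E : niche_hypergraph D0 = E.
Proof.
apply/setP => e; rewrite inE inE'; apply/idP/idP.
  case/andP => he /existsP[v]; case: (vertP v) => [|i|j|k m].
  - by rewrite in_c out_c; case/orP => ->; rewrite ?orbT.
  - case/orP => /eqP ee; last by move: he; rewrite ee ltnNge out_w.
    case: (ltnP i s) => [hi|si]; last by move: he; rewrite ee ltnNge in_w_small.
    by apply/orP; right; apply/orP; right; apply/existsP; exists (Ordinal hi);
      rewrite ee (in_w (k := Ordinal hi)).
  - case/orP => /eqP ee; first by move: he; rewrite ee ltnNge in_u.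
    case: (ltnP (r + j) s) => [hi|si]; last by move: he; rewrite ee ltnNge out_u_small.
    by apply/orP; right; apply/orP; right; apply/existsP; exists (Ordinal hi);
      rewrite ee (out_u (k := Ordinal hi)).
  - by case/orP => /eqP ee; move: he; rewrite ee ltnNge ?in_b ?out_b.
have r2 : 1 < r by apply: ltn_trans hr.
case/or3P => [/eqP->|/eqP->|/existsP[k /eqP->]].
- by rewrite cardF r2 /=; apply/existsP; exists vc; rewrite out_c eqxx orbT.
- by rewrite cardG r2 /=; apply/existsP; exists vc; rewrite in_c eqxx.
rewrite cardH r2 /=; apply/existsP.
case: (ltnP k r) => [kr|rk].
  by exists (vw (Ordinal kr)); rewrite (in_w (k := k)) ?eqxx.
have jr : k - r < r.
  by rewrite ltn_subLR // addnn -mul2n (leq_trans (ltn_ord k) hs).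
by exists (vu (Ordinal jr)); rewrite (out_u (k := k)) ?eqxx ?orbT //= subnKC.
Qed.

Lemma uniformE : uniform r E.
Proof.
move=> e; rewrite inE' => /or3P[/eqP->|/eqP->|/existsP[k /eqP->]];
  by rewrite ?cardF ?cardG ?cardH.
Qed.

Lemma hypergraphE : is_hypergraph E.
Proof.
split.
  move=> e e' he he' sub; apply/eqP; rewrite eqEcard sub /=.
  by rewrite (uniformE he) (uniformE he').
move=> e he; rewrite (uniformE he); exact: ltnW.
Qed.

Lemma inter_c e e' : e \in E -> e' \in E -> e != e' ->
  forall x, x \in e -> x \in e' -> x = vc.
Proof.
rewrite !inE' => he he' ne x xe xe'.
case/or3P: he ne xe => [/eqP ee|/eqP ee|/existsP[k /eqP ee]]; subst e;
case/or3P: he' xe' => [/eqP ee|/eqP ee|/existsP[l /eqP ee]]; subst e';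
  rewrite ?inF ?inG ?inH; try (by rewrite eqxx);
  case: (vertP x) => //=.
move=> k' m /eqP -> ne /eqP e; by rewrite e eqxx in ne.
Qed.

Lemma linearE : linear_hg E.
Proof.
move=> e e' he he' ne; apply: card_le1 => x y.
rewrite !inE => /andP[x1 x2] /andP[y1 y2].
by rewrite (inter_c he he' ne x1 x2) (inter_c he he' ne y1 y2).
Qed.

Lemma rpos : 0 < r.-1.
Proof. by case: r hr => [|[|[|n]]]. Qed.
Definition m0 : 'I_r.-1 := Ordinal rpos.

Lemma Hk_inj : injective Hk.
Proof.
move=> k l e; have : vb k m0 \in Hk l by rewrite -e inH /= eqxx.
by rewrite inH /= => /eqP.
Qed.

Lemma degree_c : degree E vc = s.
Proof.
rewrite /degree.
have -> : [set e in E | vc \in e] = [set Hk k | k : 'I_s].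
  apply/setP => e; rewrite inE.
  apply/andP/imsetP => [[]|[k _ ->]].
    rewrite inE' => /or3P[/eqP->|/eqP->|/existsP[k /eqP->]]; rewrite ?inF ?inG //.
    by move=> _; exists k.
  by rewrite inE' inH eqxx; split => //; apply/orP; right; apply/orP; right;
    apply/existsP; exists k.
by rewrite card_imset ?card_ord //; exact: Hk_inj.
Qed.

Lemma degree_other v : v != vc -> degree E v <= 1.
Proof.
move=> nv; apply: card_le1 => e e'; rewrite inE => /andP[he ve]; rewrite inE => /andP[he' ve'].
case: (eqVneq e e') => // ne.
by have := inter_c he he' ne ve ve'; move/eqP; rewrite (negbTE nv).
Qed.

Lemma maxdegE : 1 <= s -> max_degree E = s.
Proof.
move=> s1; apply/eqP; rewrite eqn_leq; apply/andP; split.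
  apply/bigmax_leqP => v _; case: (eqVneq v vc) => [->|nv].
    by rewrite degree_c.
  exact: leq_trans (degree_other nv) s1.
by rewrite -{1}degree_c; apply: leq_bigmax.
Qed.

Definition opred (i : 'I_r) : 'I_r :=
  Ordinal (leq_ltn_trans (leq_pred i) (ltn_ord i)).

Definition par (x : VT) : VT :=
  match x with
  | inl (inl (inl _)) => vc
  | inl (inl (inr i)) => if (i : nat) == 0 then vc else vw (opred i)
  | inl (inr j) => if (j : nat) == 0 then vc else vu (opred j)
  | inr _ => vc
  end.

Definition rk (x : VT) : nat :=
  match x with
  | inl (inl (inl _)) => 0
  | inl (inl (inr i)) => i.+1
  | inl (inr j) => j.+1
  | inr _ => 1
  end.

Lemma rk_par x : x != vc -> rk (par x) < rk x.
Proof.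
case: (vertP x) => //= [i|j] _.
  by case: eqP => //= /eqP; rewrite ltnS ltn_predL lt0n.
by case: eqP => //= /eqP; rewrite ltnS ltn_predL lt0n.
Qed.

Definition i0 : 'I_r := Ordinal (leq_trans (ltn0Sn 1) (ltnW hr)).

Lemma hypertreeE : hypertree E.
Proof.
exists (ptree vc par); split; first exact: ptree_is_tree rk_par.
move=> e; rewrite inE' => /or3P[/eqP->|/eqP->|/existsP[k /eqP->]].
- apply: (@ptree_induced _ vc par rk rk_par _ (vw i0)); first by rewrite inF.
  move=> x; rewrite inF; case: (vertP x) => //= i _ ne.
  case: eqP => [ei|_]; last by rewrite inF.
  by move: ne; have -> : i = i0 by apply: val_inj. 
- apply: (@ptree_induced _ vc par rk rk_par _ (vu i0)); first by rewrite inG.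
  move=> x; rewrite inG; case: (vertP x) => //= i _ ne.
  case: eqP => [ei|_]; last by rewrite inG.
  by move: ne; have -> : i = i0 by apply: val_inj.
apply: (@ptree_induced _ vc par rk rk_par _ (vc)); first by rewrite inH eqxx.
move=> x; rewrite inH; case: (vertP x) => //= k' m _ _.
by rewrite inH eqxx.
Qed.

Definition lvl (x : VT) : nat :=
  match x with
  | inl (inl (inl _)) => 1
  | inl (inl (inr _)) => 2
  | inl (inr _) => 0
  | inr _ => 1
  end.

Lemma D0_lvl x y : D0 x y -> lvl x < lvl y.
Proof. by case: (vertP x); case: (vertP y). Qed.

End Constr.

Theorem theorem3 (r s : nat) :
  3 <= r -> 3 <= s <= 2 * r ->
  exists (T : finType) (E : {set {set T}}),
    is_hypergraph E /\ uniform r E /\ linear_hg E /\ hypertree E /\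
    max_degree E = s /\ niche_number_is E 0.
Proof.
move=> hr /andP[hs1 hs2].
exists (VT r s), (@E r s).
split; first by apply: hypergraphE.
split; first by apply: uniformE.
split; first by apply: linearE.
split; first by apply: hypertreeE.
split; first by apply: maxdegE => //; apply: leq_trans hs1.
split => //.
exists (liftD (@D0 r s)); split; first exact: liftD_acyclic (@D0_lvl r s).
by rewrite liftNH NH_E.
Qed.
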